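(* Let $\ell\ge2$ and $A=\{0,1\}^\ell\setminus\{\mathbf{0},\mathbf{1}\}$. If $\mathbf{v}\in(0,1)^\ell$ satisfies $1<\|\mathbf{v}\|_1<\ell-1$, then there exists $d:A\to(0,1)$ with $\sum_{\mathbf{t}\in A}d(\mathbf{t})=1$ such that $\mathbf{v}=\sum_{\mathbf{t}\in A}d(\mathbf{t})\,\mathbf{t}$.
   Context: $\mathbf{0}$ and $\mathbf{1}$ are the all-zeros and all-ones vectors in $\mathbb{R}^\ell$; $\|\cdot\|_1$ is the $L^1$ norm. *)

(* Defs.v *)
From mathcomp Require Import all_boot all_order all_algebra.
From mathcomp Require Import reals.
Set Implicit Arguments. Unset Strict Implicit. Unset Printing Implicit Defensive.
Import Order.TTheory GRing.Theory Num.Theory.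
Local Open Scope ring_scope.

Definition cube (l : nat) := {ffun 'I_l -> bool}.

Definition cubeA (l : nat) : {set cube l} :=
  [set t : cube l | (t != [ffun => false]) && (t != [ffun => true])].

Definition cube_vec (R : realType) (l : nat) (t : cube l) : 'rV[R]_l :=
  \row_i ((t i : nat)%:R).

Definition norm1 (R : realType) (l : nat) (v : 'rV[R]_l) : R :=
  \sum_i `|v ord0 i|.

(* Main.v *)
Require Import Defs.
From mathcomp Require Import all_boot all_order all_algebra.
From mathcomp Require Import reals.
From mathcomp Require Import ring lra.
Set Implicit Arguments. Unset Strict Implicit. Unset Printing Implicit Defensive.
Import Order.TTheory GRing.Theory Num.Theory.
Local Open Scope ring_scope.

Section Hull.
Variables (R : realType) (l : nat).

Definition hull (w : 'I_l -> R) := exists d : cube l -> R,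
  (forall t, 0 <= d t) /\ \sum_(t in cubeA l) d t = 1 /\
  forall k, w k = \sum_(t in cubeA l) d t * (t k : nat)%:R.

Lemma hull_ext (w w' : 'I_l -> R) : (forall k, w k = w' k) -> hull w' -> hull w.
Proof. by move=> e [d [h1 [h2 h3]]]; exists d; split=> //; split=> // k; rewrite e. Qed.

Lemma hull_pt (t : cube l) : t \in cubeA l -> hull (fun k => (t k : nat)%:R).
Proof.
move=> tA; exists (fun s => (s == t)%:R); split; first by move=> s; rewrite ler0n.
split.
  by rewrite (bigD1 t) //= eqxx big1 ?addr0 // => s /andP[_ /negPf ->].
move=> k; rewrite (bigD1 t) //= eqxx mul1r big1 ?addr0 // => s /andP[_ /negPf ->].
by rewrite mul0r.
Qed.

Lemma hull_mix (w w1 w2 : 'I_l -> R) a b : hull w1 -> hull w2 -> 0 <= a -> 0 <= b -> a + b = 1 ->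
  (forall k, w k = a * w1 k + b * w2 k) -> hull w.
Proof.
move=> [d1 [d1p [d1s d1w]]] [d2 [d2p [d2s d2w]]] a0 b0 ab hw.
exists (fun t => a * d1 t + b * d2 t); split.
  by move=> t; rewrite addr_ge0 // mulr_ge0.
split.
  by rewrite big_split /= -!mulr_sumr d1s d2s !mulr1.
move=> k; rewrite hw d1w d2w !mulr_sumr -big_split /=; apply: eq_bigr => t _; ring.
Qed.

Definition F (w : 'I_l -> R) : {set 'I_l} := [set k | (0 < w k) && (w k < 1)].
Definition u (i j k : 'I_l) : R := (k == i)%:R - (k == j)%:R.
Definition dl (w : 'I_l -> R) i j := Num.min (1 - w i) (w j).
Definition step (w : 'I_l -> R) i j k := w k + dl w i j * u i j k.

Lemma sum_ind (i : 'I_l) : \sum_k ((k == i)%:R : R) = 1.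
Proof. by rewrite (bigD1 i) //= eqxx big1 ?addr0 // => k /negPf ->. Qed.

Lemma step_prop w i j : i != j -> i \in F w -> j \in F w -> (forall k, 0 <= w k <= 1) ->
  [/\ 0 < dl w i j, (forall k, 0 <= step w i j k <= 1),
      \sum_k step w i j k = \sum_k w k & F (step w i j) \proper F w].
Proof.
move=> hij iF jF hw; move: (iF) (jF); rewrite !inE => /andP[i0 i1] /andP[j0 j1].
have dpos : 0 < dl w i j by rewrite /dl lt_min subr_gt0 i1 j0.
have si : step w i j i = w i + dl w i j by rewrite /step /u eqxx (negbTE hij) subr0 mulr1.
have sj : step w i j j = w j - dl w i j.
  by rewrite /step /u eqxx eq_sym (negbTE hij) sub0r mulrN1.
have sk : forall k, k != i -> k != j -> step w i j k = w k.
  by move=> k /negbTE ki /negbTE kj; rewrite /step /u ki kj subrr mulr0 addr0.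
have d1 : dl w i j <= 1 - w i by rewrite /dl ge_min lexx.
have d2 : dl w i j <= w j by rewrite /dl ge_min lexx orbT.
split => //.
- move=> k; have [->|ki] := eqVneq k i.
    by rewrite si; apply/andP; split; lra.
  have [->|kj] := eqVneq k j.
    by rewrite sj; apply/andP; split; lra.
  by rewrite sk.
- by rewrite /step big_split /= -mulr_sumr /u sumrB !sum_ind subrr mulr0 addr0.
- apply/properP; split.
    apply/subsetP => k; have [->|ki] := eqVneq k i => //.
    have [->|kj] := eqVneq k j => //.
    by rewrite !inE sk.
  have [h|h] := leP (1 - w i) (w j).
    exists i => //; rewrite inE si /dl (min_l h); apply/negP => /andP[_]; lra.
  exists j => //; rewrite inE sj /dl (min_r (ltW h)); apply/negP => /andP[]; lra.
Qed.

Lemma hull_base w : (forall k, 0 <= w k <= 1) -> 1 <= \sum_k w k -> \sum_k w k <= l%:R - 1 ->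
  (forall i j, i \in F w -> j \in F w -> i = j) -> hull w.
Proof.
move=> hw s1 s2 hF.
have h01 : forall k, k \notin F w -> w k = 0 \/ w k = 1.
  move=> k; rewrite inE negb_and -!leNgt => hk; have /andP[a b] := hw k.
  by case/orP: hk => hk; [left|right]; apply/eqP; rewrite eq_le hk ?a ?b.
have cst : \sum_(i < l) (1:R) = l%:R by rewrite sumr_const card_ord.
case: (set_0Vmem (F w)) => [F0 | [k kF]].
  have h01' : forall k, w k = 0 \/ w k = 1 by move=> k; apply: h01; rewrite F0 inE.
  pose t : cube l := [ffun k => w k == 1].
  have wt : forall k, w k = (t k : nat)%:R.
    move=> k; rewrite ffunE; case: (h01' k) => ->; rewrite ?eqxx //.
    by rewrite eq_sym oner_eq0.
  apply: (hull_ext wt); apply: hull_pt; rewrite inE; apply/andP; split; apply/negP => /eqP tE.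
    have : \sum_k w k = 0 by rewrite big1 // => k _; rewrite wt tE ffunE.
    lra.
  have : \sum_k w k = l%:R by rewrite -cst; apply: eq_bigr => k _; rewrite wt tE ffunE.
  lra.
have oth : forall i, i != k -> w i = 0 \/ w i = 1.
  move=> i ik; apply: h01; apply/negP => iF; move: ik; by rewrite (hF _ _ iF kF) eqxx.
move: (kF); rewrite inE => /andP[k0 k1].
pose t0 : cube l := [ffun i => (i != k) && (w i == 1)].
pose t1 : cube l := [ffun i => (i == k) || (w i == 1)].
have sk : \sum_i w i = w k + \sum_(i | i != k) w i by rewrite (bigD1 k).
apply: (@hull_mix _ (fun i => (t0 i : nat)%:R) (fun i => (t1 i : nat)%:R) (1 - w k) (w k)).
- apply: hull_pt; rewrite inE; apply/andP; split; apply/negP => /eqP tE.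
    have : \sum_(i | i != k) w i = 0.
      rewrite big1 // => i ik; case: (oth i ik) => // h.
      by move/ffunP: (tE) => /(_ i); rewrite !ffunE ik h eqxx.
    lra.
  by move/ffunP: (tE) => /(_ k); rewrite !ffunE eqxx.
- apply: hull_pt; rewrite inE; apply/andP; split; apply/negP => /eqP tE.
    by move/ffunP: (tE) => /(_ k); rewrite !ffunE eqxx.
  have : \sum_(i | i != k) w i = \sum_(i | i != k) (1:R).
    apply: eq_bigr => i ik; case: (oth i ik) => // h.
    move/ffunP: (tE) => /(_ i); rewrite !ffunE (negbTE ik) h /=.
    by rewrite eq_sym oner_eq0.
  rewrite (bigD1 k) //= in cst; lra.
- lra.
- lra.
- lra.
- move=> i; rewrite !ffunE; have [->|ik] := eqVneq i k; first by rewrite /=; ring.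
  by case: (oth i ik) => ->; rewrite ?eqxx /= ?(eq_sym 0 1) ?oner_eq0 /=; ring.
Qed.

Lemma hull_main n w : (#|F w| <= n)%N -> (forall k, 0 <= w k <= 1) -> 1 <= \sum_k w k ->
  \sum_k w k <= l%:R - 1 -> hull w.
Proof.
elim: n w => [|n IH] w hc hw s1 s2.
  apply: hull_base => // i j; move: hc; rewrite leqn0 => /eqP/cards0_eq ->; by rewrite inE.
case: (boolP [exists i, exists j, [&& i \in F w, j \in F w & i != j]]).
  move=> /existsP[i /existsP[j /and3P[iF jF hij]]].
  have [dp1 wp1 sp1 pp1] := step_prop hij iF jF hw.
  have hji : j != i by rewrite eq_sym.
  have [dp2 wp2 sp2 pp2] := step_prop hji jF iF hw.
  have dne : dl w i j + dl w j i != 0 by rewrite lt0r_neq0 // addr_gt0.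
  apply: (@hull_mix w (step w i j) (step w j i) (dl w j i / (dl w i j + dl w j i))
                     (dl w i j / (dl w i j + dl w j i))).
  - apply: (IH); [ by rewrite -ltnS; apply: leq_trans hc; apply: proper_card | by [] | by rewrite sp1 | by rewrite sp1].
  - apply: (IH); [ by rewrite -ltnS; apply: leq_trans hc; apply: proper_card | by [] | by rewrite sp2 | by rewrite sp2].
  - by rewrite divr_ge0 // ltW // addr_gt0.
  - by rewrite divr_ge0 // ltW // addr_gt0.
  - by field.
  - by move=> k; rewrite /step /u; field.
move=> /existsPn H; apply: hull_base => // i j iF jF; apply/eqP.
by have := H i; move/existsPn/(_ j); rewrite iF jF /= negbK.
Qed.


Definition neg (t : cube l) : cube l := [ffun i => ~~ t i].
Lemma negK : involutive neg.
Proof. by move=> t; apply/ffunP => i; rewrite !ffunE negbK. Qed.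

Lemma neg_A t : (neg t \in cubeA l) = (t \in cubeA l).
Proof.
have E : forall b, (neg t == [ffun => b]) = (t == [ffun => ~~ b]).
  move=> b; apply/eqP/eqP => h; apply/ffunP => i; move/ffunP: h => /(_ i); rewrite !ffunE.
    by move=> <-; rewrite negbK.
  by move=> ->; rewrite negbK.
by rewrite !inE E E /= andbC.
Qed.

Lemma sum_half k : \sum_(t in cubeA l) ((t k : nat)%:R : R) = #|cubeA l|%:R / 2.
Proof.
have h : \sum_(t in cubeA l) ((t k : nat)%:R : R) = \sum_(t in cubeA l) (1 - (t k : nat)%:R).
  rewrite (reindex_inj (inv_inj negK)) /=; apply: eq_big => t; first by rewrite neg_A.
  by move=> _; rewrite ffunE; case: (t k); rewrite /= ?subrr ?subr0.
rewrite sumrB sumr_const in h. move: h. set S := \sum_(t in _) _. set N := (_ *+ _). move=> h. lra.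
Qed.

End Hull.

Theorem lemma14 (R : realType) (l : nat) (hl : (2 <= l)%N) (v : 'rV[R]_l) :
  (forall i, 0 < v ord0 i < 1) ->
  1 < norm1 v < l%:R - 1 ->
  exists d : cube l -> R,
    (forall t, t \in cubeA l -> 0 < d t < 1) /\
    \sum_(t in cubeA l) d t = 1 /\
    v = \sum_(t in cubeA l) d t *: cube_vec R t.
Proof.
move=> hv hs.
set s := \sum_i v ord0 i.
have ns : norm1 v = s.
  by rewrite /norm1; apply: eq_bigr => i _; rewrite ger0_norm // ltW //; case/andP: (hv i).
rewrite ns in hs; case/andP: hs => hs1 hs2.
pose eta := \big[Num.min/1]_i Num.min (v ord0 i) (1 - v ord0 i).
have eta0 : 0 < eta.
  rewrite /eta; apply: (big_ind (fun x : R => 0 < x)) => //[x y hx hy| i _]; first by rewrite lt_min hx hy.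
  by case/andP: (hv i) => a b; rewrite lt_min a subr_gt0 b.
have etale : forall i, eta <= v ord0 i /\ eta <= 1 - v ord0 i.
  move=> i; rewrite /eta (bigD1 i) //=.
  set r := \big[_/_]_(j | _) _.
  have h1 : Num.min (Num.min (v ord0 i) (1 - v ord0 i)) r <= Num.min (v ord0 i) (1 - v ord0 i).
    by rewrite ge_min lexx.
  split; apply: le_trans h1 _; by rewrite ge_min lexx ?orbT.
have l0 : (0 < l)%N by apply: leq_trans hl.
have L0 : 0 < (l%:R : R) by rewrite ltr0n.
have L2 : 2 <= (l%:R : R) by rewrite (ler_nat R 2 l).
pose c := Num.min (s - 1) (l%:R - 1 - s).
have cpos : 0 < c by rewrite lt_min !subr_gt0 hs1 hs2.
have c1 : c <= s - 1 by rewrite ge_min lexx.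
have c2 : c <= l%:R - 1 - s by rewrite ge_min lexx orbT.
pose eps := Num.min (Num.min eta (c / l%:R)) (1/2).
have e0 : 0 < eps.
  have h2 : 0 < c / l%:R := divr_gt0 cpos L0. have h3 : (0:R) < 1/2 by lra.
  by rewrite !lt_min eta0 h2 h3.
have e1 : eps <= Num.min eta (c / l%:R) by rewrite ge_min lexx.
have e2 : eps <= eta by apply: le_trans e1 _; rewrite ge_min lexx.
have e3 : eps <= c / l%:R by apply: le_trans e1 _; rewrite ge_min lexx orbT.
have e4 : eps <= 1/2 by rewrite ge_min lexx orbT.
have epsl : eps * l%:R <= c by rewrite -ler_pdivlMr.
have ne : 0 < 1 - eps by lra.
pose w := fun i => (v ord0 i - eps/2) / (1 - eps).
have wb : forall i, 0 <= w i <= 1.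
  move=> i; have [a b] := etale i; case/andP: (hv i) => a' b'.
  apply/andP; split; first by rewrite divr_ge0 //; lra.
  by rewrite ler_pdivrMr //; lra.
have wsum : \sum_i w i = (s - eps/2 * l%:R) / (1 - eps).
  by rewrite /w -mulr_suml sumrB sumr_const card_ord -[_ *+ l]mulr_natr.
have ws1 : 1 <= \sum_i w i by rewrite wsum ler_pdivlMr //; nra.
have ws2 : \sum_i w i <= l%:R - 1 by rewrite wsum ler_pdivrMr //; nra.
have [dw [dwp [dws dww]]] := hull_main (leqnn _) wb ws1 ws2.
pose i0 := @Ordinal l 0 l0.
pose i1 := @Ordinal l 1 hl.
pose t0 : cube l := [ffun i => i == i0].
have t0A : t0 \in cubeA l.
  rewrite inE; apply/andP; split; apply/negP => /eqP h; move/ffunP: h.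
    by move=> /(_ i0); rewrite !ffunE eqxx.
  by move=> /(_ i1); rewrite !ffunE.
have N0 : (0 < #|cubeA l|)%N by apply/card_gt0P; exists t0.
have N0' : 0 < (#|cubeA l|%:R : R) by rewrite ltr0n.
pose d := fun t => eps / #|cubeA l|%:R + (1 - eps) * dw t.
have dpos : forall t, 0 < d t.
  move=> t; have : 0 < eps / #|cubeA l|%:R by rewrite divr_gt0.
  have : 0 <= (1 - eps) * dw t by rewrite mulr_ge0 // ltW.
  rewrite /d; lra.
have dsum : \sum_(t in cubeA l) d t = 1.
  rewrite /d big_split /= sumr_const -mulr_sumr dws -[_ *+ #|cubeA l|]mulr_natr divfK ?lt0r_neq0 //; ring.
exists d; split; last split => //.
  move=> t tA; apply/andP; split; first exact: dpos.
  have nt : (neg t \in cubeA l) && (neg t != t).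
    rewrite neg_A tA /=; apply/eqP => h; move/ffunP: h => /(_ i0); rewrite ffunE.
    by case: (t i0).
  move: dsum; rewrite (bigD1 t) //= (bigD1 (neg t)) //=.
  have := dpos (neg t).
  have : 0 <= \sum_(i | (i \in cubeA l) && (i != t) && (i != neg t)) d i.
    by apply: sumr_ge0 => i _; apply: ltW.
  lra.
apply/rowP => k; rewrite summxE.
under eq_bigr => t _ do rewrite /cube_vec !mxE /d mulrDl -!mulrA.
rewrite big_split /= -!mulr_sumr sum_half -dww /w.
field; rewrite ?lt0r_neq0 //.
Qed.
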